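(* Assume $\mathscr{R}_0>\frac{\sigma_m(\mu+r)C_I}{\mu\beta}$ (equivalently $C_I<\frac{\beta A}{(\mu+r)(\mu+\beta+\rho)}$) and $$C_I\le\frac{\mu^2}{\mu+r}\left(\sqrt{\frac{\beta}{\mu\sigma_m}+\frac{1}{\sigma_s}}-\sqrt{\frac{1}{\sigma_s}}\right)^2.$$ Then, with $K=1+\frac{\sigma_m(\mu+r)}{\mu\beta}C_I$: if $(\sqrt p+\sqrt q)^2\le\mathscr{R}_0\le1$, $E^*$ is not an endemic equilibrium but $E_1^*$ and $E_2^*$ are; if $1<\mathscr{R}_0<K$, all of $E^*,E_1^*,E_2^*$ are endemic equilibria; if $\mathscr{R}_0=K$, $E^*$ and $E_1^*$ are endemic equilibria but $E_2^*$ is not; if $\mathscr{R}_0>K$, $E_1^*$ is the unique endemic equilibrium.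
   Context: Let $A,\sigma_m,\sigma_s,\mu,\rho,\beta,r,C_I$ be positive constants. Write $[x]^+=\max\{0,x\}$ and $T(I_s)=rI_s$ if $I_s<C_I$, $T(I_s)=rC_I$ if $I_s\ge C_I$. System (3) is $$S'=A-\sigma_mSI_m-\sigma_sS[I_s-C_I]^+-\mu S,\quad I_m'=\sigma_mSI_m+\sigma_sS[I_s-C_I]^+-(\mu+\rho+\beta)I_m,\quad I_s'=\beta I_m-T(I_s)-\mu I_s.$$ $\mathscr{R}_0=\frac{A\sigma_m}{\mu(\mu+\beta+\rho)}$. An endemic equilibrium is an equilibrium of (3) with $S,I_m,I_s>0$. $E^*=(S^*,I_m^*,I_s^* )$ with $S^*=\frac{\mu+\beta+\rho}{\sigma_m}$, $I_m^*=\frac{\mu(\mathscr{R}_0-1)}{\sigma_m}$, $I_s^*=\frac{\mu\beta(\mathscr{R}_0-1)}{\sigma_m(\mu+r)}$. Let $p=\frac{(\mu+r)\sigma_m\sigma_sC_I}{\mu(\mu\sigma_m+\beta\sigma_s)}$, $q=\frac{\mu\sigma_m}{\mu\sigma_m+\beta\sigma_s}$, and $S_{1,2}^*=\frac{\mu+\beta+\rho}{2\sigma_m}\big\{\mathscr{R}_0-p+q\mp\sqrt{(\mathscr{R}_0-p-q)^2-4pq}\big\}$ (minus sign for $S_1^*$, plus for $S_2^*$), $I_{m_i}^*=\frac{\mu\mathscr{R}_0}{\sigma_m}-\frac{\mu S_i^*}{\mu+\beta+\rho}$, $I_{s_i}^*=\frac{\beta\mathscr{R}_0}{\sigma_m}-\frac{\beta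 S_i^*}{\mu+\beta+\rho}-\frac{rC_I}{\mu}$, $E_i^*=(S_i^*,I_{m_i}^*,I_{s_i}^* )$, $i=1,2$. ''$E_i^*$ exists'' / ''$E_i^*$ is an endemic equilibrium'' means $S_i^*$ is real, $S_i^*>0$, $I_{m_i}^*>0$ and $I_{s_i}^*>C_I$; ''$E^*$ exists'' means $E^*$ is an endemic equilibrium. *)

(* Defs.v *)
From Stdlib Require Import Reals.
Open Scope R_scope.

Definition pospart (x : R) : R := Rmax 0 x.

Definition Ttreat (r C_I Is : R) : R := if Rlt_dec Is C_I then r * Is else r * C_I.

(* right-hand sides of system (3) *)
Definition f_S (A sm ss mu C_I S Im Is : R) : R :=
  A - sm * S * Im - ss * S * pospart (Is - C_I) - mu * S.
Definition f_Im (sm ss mu rho beta C_I S Im Is : R) : R :=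
  sm * S * Im + ss * S * pospart (Is - C_I) - (mu + rho + beta) * Im.
Definition f_Is (mu beta r C_I Im Is : R) : R :=
  beta * Im - Ttreat r C_I Is - mu * Is.

Definition is_equilibrium (A sm ss mu rho beta r C_I S Im Is : R) : Prop :=
  f_S A sm ss mu C_I S Im Is = 0 /\
  f_Im sm ss mu rho beta C_I S Im Is = 0 /\
  f_Is mu beta r C_I Im Is = 0.

Definition endemic_eq (A sm ss mu rho beta r C_I S Im Is : R) : Prop :=
  is_equilibrium A sm ss mu rho beta r C_I S Im Is /\ 0 < S /\ 0 < Im /\ 0 < Is.

Definition Rnought (A sm mu rho beta : R) : R := A * sm / (mu * (mu + beta + rho)).

Definition Sstar (sm mu rho beta : R) : R := (mu + beta + rho) / sm.
Definition Imstar (A sm mu rho beta : R) : R := mu * (Rnought A sm mu rho beta - 1) / sm.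
Definition Isstar (A sm mu rho beta r : R) : R :=
  mu * beta * (Rnought A sm mu rho beta - 1) / (sm * (mu + r)).

Definition pp (sm ss mu beta r C_I : R) : R :=
  (mu + r) * sm * ss * C_I / (mu * (mu * sm + beta * ss)).
Definition qq (sm ss mu beta : R) : R := mu * sm / (mu * sm + beta * ss).

Definition disc (A sm ss mu rho beta r C_I : R) : R :=
  let R0v := Rnought A sm mu rho beta in
  let p := pp sm ss mu beta r C_I in
  let q := qq sm ss mu beta in
  (R0v - p - q) ^ 2 - 4 * p * q.

(* S_i^*, i = 1 (minus sign), i = 2 (plus sign); uses sqrt, which is only
   meaningful when disc >= 0 (this realness is part of "E_i^* exists") *)
Definition Si (i : nat) (A sm ss mu rho beta r C_I : R) : R :=
  let R0v := Rnought A sm mu rho beta in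
  let p := pp sm ss mu beta r C_I in
  let q := qq sm ss mu beta in
  let sg := if Nat.eqb i 1 then -1 else 1 in
  (mu + beta + rho) / (2 * sm) *
    (R0v - p + q + sg * sqrt (disc A sm ss mu rho beta r C_I)).

Definition Imi (i : nat) (A sm ss mu rho beta r C_I : R) : R :=
  mu * Rnought A sm mu rho beta / sm - mu * Si i A sm ss mu rho beta r C_I / (mu + beta + rho).

Definition Isi (i : nat) (A sm ss mu rho beta r C_I : R) : R :=
  beta * Rnought A sm mu rho beta / sm - beta * Si i A sm ss mu rho beta r C_I / (mu + beta + rho)
  - r * C_I / mu.

(* "E_i^* exists" / "E_i^* is an endemic equilibrium" as defined in the paper:
   S_i^* real, S_i^* > 0, I_{m_i}^* > 0, I_{s_i}^* > C_I *)
Definition Ei_exists (i : nat) (A sm ss mu rho beta r C_I : R) : Prop :=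
  0 <= disc A sm ss mu rho beta r C_I /\
  0 < Si i A sm ss mu rho beta r C_I /\
  0 < Imi i A sm ss mu rho beta r C_I /\
  C_I < Isi i A sm ss mu rho beta r C_I.

(* Main.v *)
Require Import Defs.
From Stdlib Require Import Reals Lra Psatz.
Open Scope R_scope.

Lemma quad (R0 P Q k : R) : 0<P -> 0<Q -> P+Q<=1 -> k*(1-Q^2) = P^2 -> k < R0 ->
 let p := P^2 in let q := Q^2 in
 let B := R0 - p + q in let D := (R0-p-q)^2 - 4*p*q in
 let x1 := (B - sqrt D)/2 in let x2 := (B + sqrt D)/2 in let y := R0 - k in
 ((P+Q)^2 <= R0 <= 1 \/ 1 < R0 < 1 + k -> 0 <= D /\ 0 < x1 < y /\ 0 < x2 < y) /\
 (R0 = 1+k -> 0 <= D /\ 0 < x1 < y /\ x2 = y) /\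
 (R0 > 1+k -> 0 <= D /\ 0 < x1 < y /\ y < x2).
Proof.
intros HP HQ HPQ Hk Hy p q B D x1 x2 y.
assert (HQ1 : Q < 1) by lra.
assert (Hq1 : 0 < 1 - Q^2) by nra.
assert (Hkp : 0 < k) by (assert (0 < P^2) by nra; nra).
assert (F1 : P*Q < 1 - Q^2) by nra.
assert (F2 : k*(1+Q^2) <= 1 - Q^2).
{ assert (P^2 <= (1-Q)^2) by nra.
  assert (P^2*(1+Q^2) <= (1-Q^2)^2) by nra.
  assert (k*(1+Q^2)*(1-Q^2) <= (1-Q^2)*(1-Q^2)) by nra. nra. }
assert (HB : B = y + q*(k+1)).
{ unfold B, y, p, q. rewrite <- Hk. ring. }
assert (HD : D = B^2 - 4*q*R0).
{ unfold D, B. ring. }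
assert (Hq : 0 < q) by (unfold q; nra).
assert (Hgen : 0 <= D -> x1 + x2 = B /\ x1*x2 = q*R0 /\ x1 <= x2 /\
           (y-x1)*(y-x2) = q*k*(1+k-R0)).
{ intros HD0. pose proof (sqrt_pos D). pose proof (sqrt_sqrt D HD0).
  assert (x1 + x2 = B) by (unfold x1, x2; field).
  assert (x1*x2 = q*R0).
  { unfold x1, x2. replace ((B - sqrt D) / 2 * ((B + sqrt D) / 2)) with ((B^2 - sqrt D * sqrt D)/4) by field.
    rewrite H0, HD. field. }
  split; [|split; [|split]]; auto.
  - unfold x1, x2; lra.
  - replace ((y-x1)*(y-x2)) with (y*y - (x1+x2)*y + x1*x2) by ring.
    rewrite H1, H2, HB. unfold y. ring. }
split; [|split].
- intros Hc.
  assert (Hv : y > q*(k+1)).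
  { destruct Hc as [[Ha Hb]|[Ha Hb]].
    - unfold y, q.
      assert (P^2 + 2*P*Q - k*(1+Q^2) > 0).
      { assert ((P^2 + 2*P*Q - k*(1+Q^2))*(1-Q^2) = 2*P*Q*(1-Q^2-P*Q)).
        { replace (k*(1+Q^2)*(1-Q^2)) with ((k*(1-Q^2))*(1+Q^2)) by ring.
          ring_simplify. rewrite <- Hk. ring. }
        assert (0<2*P*Q) by nra. assert (0 < 1-Q^2-P*Q) by lra.
        assert (0 < 2*P*Q*(1-Q^2-P*Q)) by (apply Rmult_lt_0_compat; lra).
        nra. }
      nra.
    - unfold y, q. nra. }
  assert (HD0 : 0 <= D).
  { assert (R0 - p - q >= 2*P*Q).
    { destruct Hc as [[Ha Hb]|[Ha Hb]]; unfold p, q.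
      - nra.
      - assert ((P+Q)^2 <= 1) by nra. nra. }
    assert (0 <= 2*P*Q) by nra.
    unfold D. replace (4*p*q) with ((2*P*Q)^2) by (unfold p, q; ring). nra. }
  destruct (Hgen HD0) as [S1 [S2 [S3 S4]]].
  assert (0 < q*k*(1+k-R0)).
  { destruct Hc as [[Ha Hb]|[Ha Hb]]; apply Rmult_lt_0_compat; nra. }
  assert (0 < B) by (rewrite HB; nra).
  split; auto. split; split; nra.
- intros Hc.
  assert (Hv : y > q*(k+1)) by (unfold y, q; nra).
  assert (HD0 : 0 <= D).
  { rewrite HD, HB. unfold y. rewrite Hc.
    match goal with |- 0 <= ?e => replace e with ((1 - q*(k+1))^2) by ring end; apply pow2_ge_0. }
  destruct (Hgen HD0) as [S1 [S2 [S3 S4]]].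
  rewrite Hc in S4. replace (1+k-(1+k)) with 0 in S4 by ring. rewrite Rmult_0_r in S4.
  assert (y - x2 = 0 \/ y - x1 = 0) by (apply Rmult_integral in S4; tauto).
  assert (y - x2 = 0) by (destruct H; lra).
  split; auto. split; [|lra]. split; [|lra].
  assert (0 < y) by (unfold y; lra). assert (x2 = y) by lra. subst x2. nra.
- intros Hc.
  assert (HD0 : 0 <= D).
  { assert (HS: 4*((y*y) - B*y + q*R0) < 0).
    { assert (y*y - B*y + q*R0 = q*k*(1+k-R0)) by (rewrite HB; unfold y; ring).
      rewrite H. assert (0 < q*k) by nra. nra. }
    rewrite HD. assert (B^2-4*q*R0 = (2*y-B)^2 - 4*(y*y-B*y+q*R0)) by ring.
    pose proof (pow2_ge_0 (2*y-B)). lra. }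
  destruct (Hgen HD0) as [S1 [S2 [S3 S4]]].
  assert (q*k*(1+k-R0) < 0) by (assert (0 < q*k) by nra; nra).
  assert (x1 < y < x2) by nra.
  split; auto. split; [|lra]. split; [|lra].
  assert (0 < y) by (unfold y; lra). nra.
Qed.

Lemma PQ_le1 (sm ss mu beta r C_I : R)
  (hsm : 0 < sm) (hss : 0 < ss) (hmu : 0 < mu)
  (hbeta : 0 < beta) (hr : 0 < r) (hC : 0 < C_I)
  (h2 : C_I <= mu ^ 2 / (mu + r) *
               (sqrt (beta / (mu * sm) + 1 / ss) - sqrt (1 / ss)) ^ 2) :
  sqrt (pp sm ss mu beta r C_I) + sqrt (qq sm ss mu beta) <= 1.
Proof.
set (t := beta*ss/(mu*sm)).
assert (ht : 0 < t) by (unfold t; apply Rdiv_lt_0_compat; nra).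
set (u := sqrt (1+t)).
assert (hu2 : u*u = 1+t) by (unfold u; apply sqrt_sqrt; lra).
assert (hu0 : 0 <= u) by (unfold u; apply sqrt_pos).
assert (hu1 : 1 < u) by nra.
assert (hq : qq sm ss mu beta = 1/(1+t)) by (unfold qq, t; field; split; nra).
assert (hp : pp sm ss mu beta r C_I = (mu+r)*ss*C_I/(mu^2*(1+t))) by (unfold pp, t; field; repeat split; nra).
set (Q := sqrt (qq sm ss mu beta)).
assert (HQ2 : Q*Q = 1/(1+t)) by (unfold Q; rewrite sqrt_sqrt; [lra| rewrite hq; apply Rlt_le, Rdiv_lt_0_compat; lra]).
assert (HQ0 : 0 <= Q) by (unfold Q; apply sqrt_pos).
assert (HQu : Q*u = 1).
{ assert ((Q*u)*(Q*u) = 1).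
  { replace ((Q*u)*(Q*u)) with ((Q*Q)*(u*u)) by ring. rewrite HQ2, hu2. field. lra. }
  assert (0 <= Q*u) by (apply Rmult_le_pos; lra).
  assert ((Q*u-1)*(Q*u+1) = 0) by (ring_simplify; lra).
  apply Rmult_integral in H1. lra. }
set (P := sqrt (pp sm ss mu beta r C_I)).
assert (HP0 : 0 <= P) by (unfold P; apply sqrt_pos).
assert (HP2 : P*P = (mu+r)*ss*C_I/(mu^2*(1+t))).
{ unfold P; rewrite sqrt_sqrt; [lra| rewrite hp; apply Rlt_le, Rdiv_lt_0_compat;
  [apply Rmult_lt_0_compat; [apply Rmult_lt_0_compat|]; lra | apply Rmult_lt_0_compat; nra]]. }
set (w := sqrt (1/ss)).
assert (hw2 : w*w = 1/ss) by (unfold w; apply sqrt_sqrt; apply Rlt_le, Rdiv_lt_0_compat; lra).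
assert (hsq : sqrt (beta / (mu * sm) + 1 / ss) = u * w).
{ unfold u, w. rewrite <- sqrt_mult by (try lra; apply Rlt_le, Rdiv_lt_0_compat; lra).
  f_equal. unfold t. field. repeat split; lra. }
rewrite hsq in h2.
assert (h2' : C_I <= mu^2/(mu+r) * (w*w) * (u-1)^2).
{ replace (mu^2/(mu+r) * (w*w) * (u-1)^2) with (mu ^ 2 / (mu + r) * (u * w - w) ^ 2) by ring. exact h2. }
rewrite hw2 in h2'.
assert (HPu2 : (P*u)*(P*u) <= (u-1)*(u-1)).
{ replace ((P*u)*(P*u)) with ((P*P)*(u*u)) by ring. rewrite HP2, hu2.
  replace ((mu + r) * ss * C_I / (mu ^ 2 * (1 + t)) * (1 + t)) with ((mu+r)*ss/mu^2 * C_I) by (field; split; nra).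
  assert (0 < (mu+r)*ss/mu^2) by (apply Rdiv_lt_0_compat; nra).
  apply Rmult_le_compat_l with (r := (mu+r)*ss/mu^2) in h2'; [|lra].
  replace ((mu + r) * ss / mu ^ 2 * (mu ^ 2 / (mu + r) * (1 / ss) * (u - 1) ^ 2)) with ((u-1)*(u-1)) in h2' by (field; repeat split; nra).
  exact h2'. }
assert (HPu : P*u <= u-1) by nra.
assert (P*u + Q*u <= u) by lra.
nra.
Qed.

Lemma Si1_eq (A sm ss mu rho beta r C_I : R) : 0 < sm ->
  Si 1 A sm ss mu rho beta r C_I = (mu+beta+rho)/sm *
   ((Rnought A sm mu rho beta - pp sm ss mu beta r C_I + qq sm ss mu beta
     - sqrt (Defs.disc A sm ss mu rho beta r C_I))/2).
Proof. intros. unfold Si. simpl. field. lra. Qed.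

Lemma Si2_eq (A sm ss mu rho beta r C_I : R) : 0 < sm ->
  Si 2 A sm ss mu rho beta r C_I = (mu+beta+rho)/sm *
   ((Rnought A sm mu rho beta - pp sm ss mu beta r C_I + qq sm ss mu beta
     + sqrt (Defs.disc A sm ss mu rho beta r C_I))/2).
Proof. intros. unfold Si. simpl. field. lra. Qed.

Lemma Isi_val (i : nat) (A sm ss mu rho beta r C_I x : R)
  (hsm : 0 < sm) (hmu : 0 < mu) (hrho : 0 < rho) (hbeta : 0 < beta) (hr : 0 < r) :
  Si i A sm ss mu rho beta r C_I = (mu+beta+rho)/sm * x ->
  Isi i A sm ss mu rho beta r C_I - C_I =
   beta/sm * (Rnought A sm mu rho beta - sm * (mu + r) * C_I / (mu * beta) - x).
Proof. intros H. unfold Isi. rewrite H. field. lra. Qed.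

Lemma Imi_val (i : nat) (A sm ss mu rho beta r C_I x : R)
  (hsm : 0 < sm) (hmu : 0 < mu) (hrho : 0 < rho) (hbeta : 0 < beta) :
  Si i A sm ss mu rho beta r C_I = (mu+beta+rho)/sm * x ->
  Imi i A sm ss mu rho beta r C_I = mu/sm * (Rnought A sm mu rho beta - x).
Proof. intros H. unfold Imi. rewrite H. field. lra. Qed.

Lemma Ei_of_x (i : nat) (A sm ss mu rho beta r C_I x : R)
  (hsm : 0 < sm) (hmu : 0 < mu) (hrho : 0 < rho) (hbeta : 0 < beta) (hr : 0 < r) (hC : 0 < C_I) :
  Si i A sm ss mu rho beta r C_I = (mu+beta+rho)/sm * x ->
  0 <= Defs.disc A sm ss mu rho beta r C_I -> 0 < x ->
  x < Rnought A sm mu rho beta - sm * (mu + r) * C_I / (mu * beta) ->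
  Ei_exists i A sm ss mu rho beta r C_I.
Proof.
intros H Hd Hx Hy.
assert (0 < sm * (mu + r) * C_I / (mu * beta)).
{ apply Rdiv_lt_0_compat; [apply Rmult_lt_0_compat; [apply Rmult_lt_0_compat|]|apply Rmult_lt_0_compat]; lra. }
assert (0 < /sm) by (apply Rinv_0_lt_compat; lra).
split; [exact Hd|]. split; [|split].
- rewrite H. unfold Rdiv. apply Rmult_lt_0_compat; [apply Rmult_lt_0_compat|]; lra.
- rewrite (Imi_val i A sm ss mu rho beta r C_I x) by assumption.
  unfold Rdiv. apply Rmult_lt_0_compat; [apply Rmult_lt_0_compat|]; lra.
- pose proof (Isi_val i A sm ss mu rho beta r C_I x hsm hmu hrho hbeta hr H).
  assert (0 < beta/sm*(Rnought A sm mu rho beta - sm * (mu + r) * C_I / (mu * beta) - x)).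
  { unfold Rdiv at 1. apply Rmult_lt_0_compat; [apply Rmult_lt_0_compat|]; lra. }
  lra.
Qed.

Lemma Estar_endemic (A sm ss mu rho beta r C_I : R)
  (hA : 0 < A) (hsm : 0 < sm) (hss : 0 < ss) (hmu : 0 < mu) (hrho : 0 < rho)
  (hbeta : 0 < beta) (hr : 0 < r) (hC : 0 < C_I) :
  1 < Rnought A sm mu rho beta <= 1 + sm * (mu + r) * C_I / (mu * beta) ->
  endemic_eq A sm ss mu rho beta r C_I
      (Sstar sm mu rho beta) (Imstar A sm mu rho beta) (Isstar A sm mu rho beta r).
Proof.
intros [H1 H2].
set (R0 := Rnought A sm mu rho beta) in *.
assert (HA : A = R0 * (mu*(mu+beta+rho))/sm) by (unfold R0, Rnought; field; repeat split; lra).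
assert (HIs : Isstar A sm mu rho beta r <= C_I).
{ unfold Isstar. fold R0.
  apply Rmult_le_compat_l with (r := mu*beta/(sm*(mu+r))) in H2.
  2:{ apply Rlt_le, Rdiv_lt_0_compat; nra. }
  replace (mu * beta / (sm * (mu + r)) * (1 + sm * (mu + r) * C_I / (mu * beta)))
   with (mu * beta / (sm * (mu + r)) + C_I) in H2 by (field; repeat split; lra).
  replace (mu * beta * (R0 - 1) / (sm * (mu + r))) with (mu * beta / (sm * (mu + r)) * R0 - mu * beta / (sm * (mu + r))) by (field; split; lra).
  lra. }
assert (Hpos : pospart (Isstar A sm mu rho beta r - C_I) = 0) by (unfold pospart; apply Rmax_left; lra).
assert (HT : Ttreat r C_I (Isstar A sm mu rho beta r) = r * Isstar A sm mu rho beta r).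
{ unfold Ttreat. destruct (Rlt_dec _ _); [reflexivity|]. f_equal. lra. }
split; [split; [|split]|].
- unfold f_S. rewrite Hpos. unfold Sstar, Imstar. fold R0. rewrite HA. field. lra.
- unfold f_Im. rewrite Hpos. unfold Sstar, Imstar. field. lra.
- unfold f_Is. rewrite HT. unfold Isstar, Imstar. fold R0. field. lra.
- unfold Sstar, Imstar, Isstar; fold R0. repeat split.
  + apply Rdiv_lt_0_compat; lra.
  + apply Rdiv_lt_0_compat; nra.
  + apply Rdiv_lt_0_compat; [|nra]. assert (0 < mu*beta) by nra. nra.
Qed.

Lemma Estar_not (A sm ss mu rho beta r C_I : R) (hsm : 0 < sm) (hmu : 0 < mu) :
  Rnought A sm mu rho beta <= 1 ->
  ~ endemic_eq A sm ss mu rho beta r C_I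
      (Sstar sm mu rho beta) (Imstar A sm mu rho beta) (Isstar A sm mu rho beta r).
Proof.
intros H [_ [_ [HI _]]]. unfold Imstar in HI.
assert (mu * (Rnought A sm mu rho beta - 1) <= 0) by nra.
assert (0 < /sm) by (apply Rinv_0_lt_compat; lra).
unfold Rdiv in HI. nra.
Qed.

Lemma endemic_shape (A sm ss mu rho beta r C_I S Im Is : R)
  (hA : 0 < A) (hsm : 0 < sm) (hss : 0 < ss) (hmu : 0 < mu) (hrho : 0 < rho)
  (hbeta : 0 < beta) (hr : 0 < r) (hC : 0 < C_I) :
  Rnought A sm mu rho beta > 1 + sm * (mu + r) * C_I / (mu * beta) ->
  endemic_eq A sm ss mu rho beta r C_I S Im Is ->
  let x := sm*S/(mu+beta+rho) in
  let R0 := Rnought A sm mu rho beta in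
  let k := sm * (mu + r) * C_I / (mu * beta) in
  0 < x /\ x < R0 - k /\
  x*x - (R0 - pp sm ss mu beta r C_I + qq sm ss mu beta)*x + qq sm ss mu beta*R0 = 0 /\
  Im = mu/sm*(R0 - x) /\ Is - C_I = beta/sm*(R0-k-x).
Proof.
intros HK [[e1 [e2 e3]] [HS [HIm HIs]]] x R0 k.
fold R0 in HK. fold k in HK.
unfold f_S, f_Im, f_Is in *.
assert (Ha : 0 < mu+beta+rho) by lra.
assert (HA : A = R0 * (mu*(mu+beta+rho))/sm) by (unfold R0, Rnought; field; repeat split; lra).
assert (HSx : S = (mu+beta+rho)*x/sm) by (unfold x; field; lra).
destruct (Rle_lt_dec Is C_I) as [Hle|Hlt].
- exfalso.
  assert (Hp : pospart (Is - C_I) = 0) by (unfold pospart; apply Rmax_left; lra).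
  assert (HT : Ttreat r C_I Is = r * Is).
  { unfold Ttreat. destruct (Rlt_dec _ _); [reflexivity|]. f_equal. lra. }
  rewrite Hp in e1, e2. rewrite HT in e3.
  assert (Im * (sm*S - (mu+beta+rho)) = 0) by (rewrite <- e2; ring).
  apply Rmult_integral in H. destruct H as [H|H]; [lra|].
  assert (HsS : sm*S = mu+beta+rho) by lra.
  rewrite Rmult_0_r, Rminus_0_r in e1. rewrite HsS in e1.
  assert (E1 : Im*sm = mu*(R0-1)).
  { apply Rmult_eq_reg_l with (r := mu+beta+rho); [|lra].
    replace ((mu+beta+rho)*(Im*sm)) with (((mu+beta+rho)*Im)*sm) by ring.
    replace ((mu+beta+rho)*Im) with (A - mu*S) by lra.
    replace ((A - mu*S)*sm) with (A*sm - mu*(sm*S)) by ring. rewrite HsS, HA. field. lra. }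
  assert (E3 : (mu+r)*Is = beta*Im) by lra.
  assert (E4 : mu*beta*(R0-1) > sm*(mu+r)*C_I).
  { assert (R0 - 1 > k) by lra. unfold k in H0.
    apply Rmult_gt_compat_l with (r := mu*beta) in H0; [|nra].
    replace (mu * beta * (sm * (mu + r) * C_I / (mu * beta))) with (sm*(mu+r)*C_I) in H0 by (field; lra).
    lra. }
  assert ((mu+r)*sm*Is = beta*mu*(R0-1)) by nra.
  assert ((mu+r)*sm*Is <= (mu+r)*sm*C_I) by (apply Rmult_le_compat_l; nra).
  nra.
- assert (Hp : pospart (Is - C_I) = Is - C_I) by (unfold pospart; apply Rmax_right; lra).
  assert (HT : Ttreat r C_I Is = r * C_I).
  { unfold Ttreat. destruct (Rlt_dec _ _); [lra|reflexivity]. }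
  rewrite Hp in e1, e2. rewrite HT in e3.
  assert (HIm' : Im = mu/sm*(R0 - x)).
  { assert (A - mu*S - (mu+beta+rho)*Im = 0) by lra.
    apply Rmult_eq_reg_l with (r := mu+beta+rho); [|lra].
    replace ((mu+beta+rho)*Im) with (A - mu*S) by lra.
    rewrite HA, HSx. field. lra. }
  assert (HIs' : Is - C_I = beta/sm*(R0-k-x)).
  { apply Rmult_eq_reg_l with (r := mu); [|lra].
    replace (mu*(Is - C_I)) with (beta*Im - r*C_I - mu*C_I) by lra.
    rewrite HIm'. unfold k. field. lra. }
  split; [|split; [|split; [|split]]]; auto.
  + unfold x. apply Rdiv_lt_0_compat; nra.
  + assert (0 < beta/sm*(R0-k-x)) by lra.
    assert (0 < beta/sm) by (apply Rdiv_lt_0_compat; lra).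
    assert (0 < R0 - k - x) by nra. lra.
  + rewrite HIs', HIm' in e2. rewrite HSx in e2.
    match type of e2 with ?L = 0 => assert (Hid : L =
      -((mu+beta+rho)/sm)*((mu*sm+beta*ss)/sm)*
      (x*x - (R0 - pp sm ss mu beta r C_I + qq sm ss mu beta)*x + qq sm ss mu beta*R0)) end.
    { unfold pp, qq, k. field. repeat split; nra. }
    rewrite Hid in e2.
    assert (0 < (mu+beta+rho)/sm*((mu*sm+beta*ss)/sm)).
    { apply Rmult_lt_0_compat; apply Rdiv_lt_0_compat; nra. }
    nra.
Qed.

Theorem theorem2p3 (A sm ss mu rho beta r C_I : R)
  (hA : 0 < A) (hsm : 0 < sm) (hss : 0 < ss) (hmu : 0 < mu) (hrho : 0 < rho)
  (hbeta : 0 < beta) (hr : 0 < r) (hC : 0 < C_I)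
  (h1 : Rnought A sm mu rho beta > sm * (mu + r) * C_I / (mu * beta))
  (h2 : C_I <= mu ^ 2 / (mu + r) *
               (sqrt (beta / (mu * sm) + 1 / ss) - sqrt (1 / ss)) ^ 2) :
  let R0v := Rnought A sm mu rho beta in
  let p := pp sm ss mu beta r C_I in
  let q := qq sm ss mu beta in
  let K := 1 + sm * (mu + r) / (mu * beta) * C_I in
  let EstarEndemic :=
    endemic_eq A sm ss mu rho beta r C_I
      (Sstar sm mu rho beta) (Imstar A sm mu rho beta) (Isstar A sm mu rho beta r) in
  ((sqrt p + sqrt q) ^ 2 <= R0v <= 1 ->
     ~ EstarEndemic /\ Ei_exists 1 A sm ss mu rho beta r C_I
                    /\ Ei_exists 2 A sm ss mu rho beta r C_I) /\
  (1 < R0v < K ->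
     EstarEndemic /\ Ei_exists 1 A sm ss mu rho beta r C_I
                  /\ Ei_exists 2 A sm ss mu rho beta r C_I) /\
  (R0v = K ->
     EstarEndemic /\ Ei_exists 1 A sm ss mu rho beta r C_I
                  /\ ~ Ei_exists 2 A sm ss mu rho beta r C_I) /\
  (R0v > K ->
     Ei_exists 1 A sm ss mu rho beta r C_I /\
     forall S Im Is, endemic_eq A sm ss mu rho beta r C_I S Im Is ->
       S = Si 1 A sm ss mu rho beta r C_I /\
       Im = Imi 1 A sm ss mu rho beta r C_I /\
       Is = Isi 1 A sm ss mu rho beta r C_I).
Proof.
intros R0v p q K EstarEndemic.
set (k := sm*(mu+r)*C_I/(mu*beta)) in *.
assert (HK : K = 1 + k) by (unfold K, k; field; lra).
assert (hk : 0 < k).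
{ unfold k. apply Rdiv_lt_0_compat; [apply Rmult_lt_0_compat; [apply Rmult_lt_0_compat|]|apply Rmult_lt_0_compat]; lra. }
assert (hq0 : 0 < q) by (unfold q, qq; apply Rdiv_lt_0_compat; nra).
assert (hq1 : q < 1).
{ unfold q, qq. apply (Rmult_lt_reg_r (mu*sm+beta*ss)); [nra|]. unfold Rdiv.
  rewrite Rmult_assoc, Rinv_l by nra. nra. }
assert (hpk : p = k*(1-q)) by (unfold p, q, k, pp, qq; field; repeat split; nra).
assert (hp0 : 0 < p) by (rewrite hpk; nra).
set (P := sqrt p). set (Q := sqrt q).
assert (HP2 : P^2 = p) by (unfold P; simpl; rewrite Rmult_1_r; apply sqrt_sqrt; lra).
assert (HQ2 : Q^2 = q) by (unfold Q; simpl; rewrite Rmult_1_r; apply sqrt_sqrt; lra).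
assert (HP : 0 < P) by (unfold P; apply sqrt_lt_R0; lra).
assert (HQ : 0 < Q) by (unfold Q; apply sqrt_lt_R0; lra).
assert (HPQ : P + Q <= 1) by (exact (PQ_le1 sm ss mu beta r C_I hsm hss hmu hbeta hr hC h2)).
assert (hkP : k*(1-Q^2) = P^2) by (rewrite HP2, HQ2; lra).
assert (h1' : k < R0v) by exact h1.
pose proof (quad R0v P Q k HP HQ HPQ hkP h1') as HQd. cbv zeta in HQd.
rewrite HP2, HQ2 in HQd.
assert (Hdisc : Defs.disc A sm ss mu rho beta r C_I = (R0v - p - q)^2 - 4*p*q) by reflexivity.
rewrite <- Hdisc in HQd.
set (D := Defs.disc A sm ss mu rho beta r C_I) in *.
set (x1 := (R0v - p + q - sqrt D)/2) in *.
set (x2 := (R0v - p + q + sqrt D)/2) in *.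
assert (HS1 : Si 1 A sm ss mu rho beta r C_I = (mu+beta+rho)/sm * x1) by (exact (Si1_eq A sm ss mu rho beta r C_I hsm)).
assert (HS2 : Si 2 A sm ss mu rho beta r C_I = (mu+beta+rho)/sm * x2) by (exact (Si2_eq A sm ss mu rho beta r C_I hsm)).
destruct HQd as [C12 [C3 C4]].
split; [|split; [|split]].
- intros Hc. destruct (C12 (or_introl Hc)) as [HD [[a1 b1] [a2 b2]]].
  split; [|split].
  + apply Estar_not; auto. fold R0v. lra.
  + exact (Ei_of_x 1 A sm ss mu rho beta r C_I x1 hsm hmu hrho hbeta hr hC HS1 HD a1 b1).
  + exact (Ei_of_x 2 A sm ss mu rho beta r C_I x2 hsm hmu hrho hbeta hr hC HS2 HD a2 b2).
- intros Hc. rewrite HK in Hc. destruct (C12 (or_intror Hc)) as [HD [[a1 b1] [a2 b2]]].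
  split; [|split].
  + apply Estar_endemic; auto. fold R0v k. lra.
  + exact (Ei_of_x 1 A sm ss mu rho beta r C_I x1 hsm hmu hrho hbeta hr hC HS1 HD a1 b1).
  + exact (Ei_of_x 2 A sm ss mu rho beta r C_I x2 hsm hmu hrho hbeta hr hC HS2 HD a2 b2).
- intros Hc. rewrite HK in Hc. destruct (C3 Hc) as [HD [[a1 b1] e2]].
  split; [|split].
  + apply Estar_endemic; auto. fold R0v k. lra.
  + exact (Ei_of_x 1 A sm ss mu rho beta r C_I x1 hsm hmu hrho hbeta hr hC HS1 HD a1 b1).
  + intros [_ [_ [_ HI]]].
    pose proof (Isi_val 2 A sm ss mu rho beta r C_I x2 hsm hmu hrho hbeta hr HS2) as HV.
    fold R0v k in HV. rewrite e2 in HV.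
    replace (R0v - k - (R0v - k)) with 0 in HV by ring. lra.
- intros Hc. rewrite HK in Hc. destruct (C4 Hc) as [HD [[a1 b1] b2]].
  split.
  + exact (Ei_of_x 1 A sm ss mu rho beta r C_I x1 hsm hmu hrho hbeta hr hC HS1 HD a1 b1).
  + intros S Im Is HE.
    pose proof (endemic_shape A sm ss mu rho beta r C_I S Im Is hA hsm hss hmu hrho hbeta hr hC Hc HE) as Hs.
    cbv zeta in Hs. fold R0v k p q in Hs.
    set (x := sm * S / (mu + beta + rho)) in Hs.
    destruct Hs as [X1 [X2 [X3 [X4 X5]]]].
    assert (Hs2 : sqrt D * sqrt D = D) by (apply sqrt_sqrt; lra).
    assert (Hfac : (x - x1)*(x - x2) = 0).
    { rewrite <- X3. unfold x1, x2. 
      replace ((x - (R0v - p + q - sqrt D) / 2) * (x - (R0v - p + q + sqrt D) / 2))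
        with (x*x - (R0v - p + q)*x + ((R0v-p+q)^2 - sqrt D * sqrt D)/4) by field.
      rewrite Hs2, Hdisc. field. }
    apply Rmult_integral in Hfac. destruct Hfac as [Hx|Hx]; [|lra].
    assert (Hxx : x = x1) by lra.
    assert (HSx : S = (mu+beta+rho)/sm * x) by (unfold x; field; lra).
    split; [|split].
    * rewrite HS1, HSx, Hxx. reflexivity.
    * rewrite (Imi_val 1 A sm ss mu rho beta r C_I x1 hsm hmu hrho hbeta HS1), X4, Hxx. reflexivity.
    * pose proof (Isi_val 1 A sm ss mu rho beta r C_I x1 hsm hmu hrho hbeta hr HS1) as HV.
      fold R0v k in HV. rewrite <- Hxx in HV. lra.
Qed.
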